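(* Let $x\mapsto x^{\mu-\nu}\mathbf{L}_\nu(x)/\tilde{t}_{\mu,\nu}(x)$ be considered on $(0,\infty)$. If $-\frac{3}{2}<\nu<\mu$, then this function is strictly increasing on $(0,\infty)$. If either $-3<\mu\leq-\frac{3}{2}$ and $|\nu|<\mu+3$, or $\mu>-\frac{3}{2}$ and $\mu<\nu<\mu+3$, then this function is strictly decreasing on $(0,\infty)$.
   Context: For real $\mu,\nu$ the (normalized) modified Lommel function of the first kind is $$\tilde{t}_{\mu,\nu}(x)=\sum_{k=0}^\infty\frac{(\frac{1}{2}x)^{\mu+2k+1}}{\Gamma\big(k+\frac{\mu-\nu+3}{2}\big)\Gamma\big(k+\frac{\mu+\nu+3}{2}\big)},\quad x>0,$$ and the modified Struve function of the first kind is $$\mathbf{L}_\nu(x)=\sum_{k=0}^\infty\frac{(\frac{1}{2}x)^{2k+\nu+1}}{\Gamma(k+\frac{3}{2})\Gamma(k+\nu+\frac{3}{2})}.$$ *)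

(* Defs.v *)
From Stdlib Require Import Reals.
From Coquelicot Require Import Coquelicot.
Open Scope R_scope.

(* Euler Gamma function, via the improper Riemann integral
   Gamma(s) = \int_0^oo t^(s-1) e^(-t) dt  (only used for s > 0). *)
Definition Gamma (s : R) : R :=
  RInt_gen (fun t => Rpower t (s - 1) * exp (- t))
           (at_right 0) (Rbar_locally p_infty).

Definition lommel_t (mu nu x : R) : R :=
  Series (fun k : nat =>
    Rpower (x / 2) (mu + 2 * INR k + 1) /
    (Gamma (INR k + (mu - nu + 3) / 2) * Gamma (INR k + (mu + nu + 3) / 2))).

Definition struveL (nu x : R) : R :=
  Series (fun k : nat =>
    Rpower (x / 2) (2 * INR k + nu + 1) /
    (Gamma (INR k + 3 / 2) * Gamma (INR k + nu + 3 / 2))).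

Definition ratio (mu nu x : R) : R :=
  Rpower x (mu - nu) * struveL nu x / lommel_t mu nu x.

(* Main.v *)
Require Import Defs.
From Stdlib Require Import Reals Lra Lia Classical.
From Coquelicot Require Import Coquelicot.
Open Scope R_scope.

Definition gf (s t : R) : R := Rpower t (s - 1) * exp (- t).

Lemma exp_ge_1px : forall x, 1 + x <= exp x.
Proof. intros x; destruct (Req_dec x 0) as [->|H]. rewrite exp_0; lra. left; apply exp_ineq1; auto. Qed.

Lemma ln_le_xm1 : forall y, 0 < y -> ln y <= y - 1.
Proof. intros y Hy. pose proof (exp_ge_1px (ln y)) as H. rewrite exp_ln in H; lra. Qed.

Lemma gf_cont : forall s t, 0 < t -> continuous (gf s) t.
Proof. intros s t Ht. apply (@ex_derive_continuous R_AbsRing R_NormedModule). unfold gf, Rpower. auto_derive. auto. Qed.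

Lemma gf_pos : forall s t, 0 < gf s t.
Proof. intros; unfold gf, Rpower. apply Rmult_lt_0_compat; apply exp_pos. Qed.

Lemma ball_R : forall (x : R) (e : R) (y : R), @ball R_UniformSpace x e y <-> Rabs (y - x) < e.
Proof. intros. unfold ball; simpl. unfold AbsRing_ball, abs, minus, plus, opp; simpl. tauto. Qed.

Lemma at_right0_lt : forall a0, 0 < a0 -> at_right 0 (fun a => 0 < a < a0).
Proof.
  intros a0 H. exists (mkposreal a0 H). intros y Hy Hp. change R in y. pose proof (proj1 (ball_R 0 a0 y) Hy) as Hy'.
  replace (y - 0) with y in Hy' by ring. pose proof (Rle_abs y). split; lra.
Qed.

Lemma at_right0_pos : at_right 0 (fun a => 0 < a).
Proof. exists (mkposreal 1 Rlt_0_1). intros y _ Hp; exact Hp. Qed.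

Lemma pinfty_gt : forall b0, Rbar_locally p_infty (fun b => b0 < b).
Proof. intros b0. exists b0. auto. Qed.

Lemma Rmin_pos_in : forall a b x, 0 < a -> 0 < b -> Rmin a b <= x -> 0 < x.
Proof. intros a b x Ha Hb H. pose proof (Rmin_glb_lt a b 0 Ha Hb). lra. Qed.

Lemma int_pow : forall s a, 0 < s -> 0 < a ->
  is_RInt (fun t => Rpower t (s - 1)) a 1 ((1 - Rpower a s) / s).
Proof.
  intros s a Hs Ha.
  assert (E : (1 - Rpower a s) / s = minus ((fun t => Rpower t s / s) 1) ((fun t => Rpower t s / s) a)).
  { simpl. unfold minus, plus, opp; simpl. unfold Rpower. rewrite ln_1, Rmult_0_r, exp_0. field. lra. }
  rewrite E. apply (@is_RInt_derive R_CompleteNormedModule (fun t => Rpower t s / s)).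
  - intros x Hx. assert (0 < x) by (apply (Rmin_pos_in a 1); lra).
    unfold Rpower. auto_derive. auto.
    replace (s - 1) with (s + - 1) by ring. rewrite Rmult_plus_distr_r, exp_plus.
    replace (-1 * ln x) with (- ln x) by ring. rewrite exp_Ropp, exp_ln by auto. field. split; lra.
  - intros x Hx. assert (0 < x) by (apply (Rmin_pos_in a 1); lra).
    apply (@ex_derive_continuous R_AbsRing R_NormedModule). unfold Rpower. auto_derive. auto.
Qed.

Lemma int_exp : forall b, is_RInt (fun t => exp (- t)) 1 b (exp (-1) - exp (- b)).
Proof.
  intros b.
  assert (E : exp (-1) - exp (- b) = minus ((fun t => - exp (- t)) b) ((fun t => - exp (- t)) 1)).
  { simpl. unfold minus, plus, opp; simpl. replace (exp (- (1))) with (exp (-1)) by (f_equal; ring). ring. }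
  rewrite E. apply (@is_RInt_derive R_CompleteNormedModule (fun t => - exp (- t))).
  - intros x Hx. auto_derive. auto. ring.
  - intros x Hx. apply (@ex_derive_continuous R_AbsRing R_NormedModule). auto_derive. auto.
Qed.

Lemma gf_exR : forall s a b, 0 < a -> 0 < b -> ex_RInt (gf s) a b.
Proof.
  intros s a b Ha Hb. apply (@ex_RInt_continuous R_CompleteNormedModule). intros z Hz. apply gf_cont.
  apply (Rmin_pos_in a b); lra.
Qed.

Lemma gf_bound : forall s a b, 0 < s <= 1 -> 0 < a < 1 -> 1 < b -> RInt (gf s) a b <= 1 / s + 1.
Proof.
  intros s a b Hs Ha Hb.
  rewrite <- (RInt_Chasles (gf s) a 1 b) by (apply gf_exR; lra).
  change (plus (RInt (gf s) a 1) (RInt (gf s) 1 b)) with (RInt (gf s) a 1 + RInt (gf s) 1 b).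
  assert (H1 : RInt (gf s) a 1 <= (1 - Rpower a s) / s).
  { rewrite <- (is_RInt_unique _ _ _ _ (int_pow s a ltac:(lra) ltac:(lra))).
    apply RInt_le. lra. apply gf_exR; lra. eexists; apply int_pow; lra.
    intros x Hx. unfold gf. rewrite <- (Rmult_1_r (Rpower x (s-1))) at 2.
    apply Rmult_le_compat_l. unfold Rpower; left; apply exp_pos.
    rewrite <- exp_0. left. apply exp_increasing. lra. }
  assert (H2 : RInt (gf s) 1 b <= exp (-1) - exp (- b)).
  { rewrite <- (is_RInt_unique _ _ _ _ (int_exp b)).
    apply RInt_le. lra. apply gf_exR; lra. eexists; apply int_exp.
    intros x Hx. unfold gf. rewrite <- (Rmult_1_l (exp (- x))) at 2.
    apply Rmult_le_compat_r. left; apply exp_pos.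
    unfold Rpower. apply Rle_trans with (exp 0); [|rewrite exp_0; lra]. destruct (Req_dec s 1) as [->|Hne].
    replace ((1 - 1) * ln x) with 0 by ring. lra.
    left. apply exp_increasing. assert (0 < ln x). { rewrite <- ln_1. apply ln_increasing; lra. }
    assert (s < 1) by (destruct (Rle_lt_or_eq_dec s 1 (proj2 Hs)); [auto|contradiction]).
    nra. }
  assert (0 < Rpower a s) by (unfold Rpower; apply exp_pos).
  assert (exp (-1) < 1) by (rewrite <- exp_0; apply exp_increasing; lra).
  pose proof (exp_pos (- b)).
  assert ((1 - Rpower a s) / s <= 1 / s). { unfold Rdiv. apply Rmult_le_compat_r. left; apply Rinv_0_lt_compat; lra. lra. }
  lra.
Qed.

Lemma gf_RInt_ge : forall s a0 b0 a b, 0 < a -> a <= a0 -> a0 <= b0 -> b0 <= b ->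
  RInt (gf s) a0 b0 <= RInt (gf s) a b.
Proof.
  intros s a0 b0 a b Ha H1 H2 H3.
  assert (0 < a0) by lra. assert (0 < b0) by lra. assert (0 < b) by lra.
  rewrite <- (RInt_Chasles (gf s) a a0 b) by (apply gf_exR; lra).
  rewrite <- (RInt_Chasles (gf s) a0 b0 b) by (apply gf_exR; lra).
  change (plus ?x ?y) with (x + y).
  assert (0 <= RInt (gf s) a a0) by (apply RInt_ge_0; [lra| apply gf_exR; lra| intros; left; apply gf_pos]).
  assert (0 <= RInt (gf s) b0 b) by (apply RInt_ge_0; [lra| apply gf_exR; lra| intros; left; apply gf_pos]).
  change (plus ?x ?y) with (x + y). lra.
Qed.

Lemma gamma_base : forall s, 0 < s <= 1 -> exists l, 0 < l /\
  is_RInt_gen (gf s) (at_right 0) (Rbar_locally p_infty) l.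
Proof.
  intros s Hs.
  set (E := fun y => exists a b, 0 < a < 1 /\ 1 < b /\ y = RInt (gf s) a b).
  assert (Hb : bound E).
  { exists (1 / s + 1). intros y [a [b [Ha [Hb' ->]]]]. apply gf_bound; auto. }
  assert (He : exists y, E y).
  { exists (RInt (gf s) (1/2) 2). exists (1/2), 2. repeat split; lra. }
  destruct (completeness E Hb He) as [L [HL1 HL2]].
  assert (Hpos : 0 < RInt (gf s) (1/2) 2).
  { apply RInt_gt_0. lra. intros; apply gf_pos. intros x Hx; apply gf_cont; lra. }
  exists L. split.
  { apply Rlt_le_trans with (RInt (gf s) (1/2) 2); auto. apply HL1. exists (1/2), 2. repeat split; lra. }
  intros P [eps HP].
  assert (Hex : exists a0 b0, 0 < a0 < 1 /\ 1 < b0 /\ L - eps < RInt (gf s) a0 b0).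
  { apply NNPP. intro Hn.
    assert (L <= L - eps).
    { apply HL2. intros y [a [b [Ha [Hb' ->]]]]. apply Rnot_lt_le. intro Hlt. apply Hn.
      exists a, b. auto. }
    destruct eps; simpl in *; lra. }
  destruct Hex as [a0 [b0 [Ha0 [Hb0 Hab]]]].
  apply Filter_prod with (Q := fun a => 0 < a < a0) (R := fun b => b0 < b).
  - apply at_right0_lt; lra.
  - apply pinfty_gt.
  - intros a b Ha Hb'. simpl. exists (RInt (gf s) a b). split.
    + apply (@RInt_correct R_CompleteNormedModule). apply gf_exR; lra.
    + apply HP. apply ball_R.
      assert (RInt (gf s) a b <= L). { apply HL1. exists a, b. repeat split; lra. }
      assert (RInt (gf s) a0 b0 <= RInt (gf s) a b) by (apply gf_RInt_ge; lra).
      rewrite Rabs_left1 by lra. lra.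
Qed.

Definition DF (s t : R) := exp (s * ln t) * exp (- t) - s * (exp ((s - 1) * ln t) * exp (- t)).

Lemma F_derive : forall s x, 0 < x ->
  is_derive (fun t => - (exp (s * ln t) * exp (- t))) x (DF s x).
Proof.
  intros s x Hx. unfold DF. auto_derive. auto.
  replace (s - 1) with (s + - 1) by ring. rewrite Rmult_plus_distr_r, exp_plus.
  replace (-1 * ln x) with (- ln x) by ring. rewrite (exp_Ropp (ln x)), exp_ln by auto. field. lra.
Qed.

Lemma F_lim0 : forall s, 0 < s ->
  filterlim (fun t => - (exp (s * ln t) * exp (- t))) (at_right 0) (locally 0).
Proof.
  intros s Hs. apply filterlim_locally. intros eps.
  set (d := exp (ln eps / s)).
  assert (Hd : 0 < d) by apply exp_pos.
  generalize (at_right0_lt d Hd). apply filter_imp. intros x [Hx1 Hx2].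
  apply ball_R.
  assert (H1 : ln x < ln eps / s).
  { rewrite <- (ln_exp (ln eps / s)). apply ln_increasing; auto. }
  assert (H2 : s * ln x < ln eps).
  { apply Rmult_lt_compat_l with (r := s) in H1; auto. replace (s * (ln eps / s)) with (ln eps) in H1 by (field; lra). auto. }
  assert (H3 : exp (s * ln x) < eps).
  { rewrite <- (exp_ln eps) by (destruct eps; simpl; lra). apply exp_increasing; auto. }
  assert (H4 : exp (- x) < 1) by (rewrite <- exp_0; apply exp_increasing; lra).
  pose proof (exp_pos (s * ln x)). pose proof (exp_pos (- x)).
  rewrite Rabs_left1 by nra. nra.
Qed.

Lemma F_liminf : forall s, 0 < s ->
  filterlim (fun t => - (exp (s * ln t) * exp (- t))) (Rbar_locally p_infty) (locally 0).
Proof.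
  intros s Hs. apply filterlim_locally. intros eps.
  set (C := s * ln (2 * s) - s).
  exists (Rmax 1 (2 * (C - ln eps))). intros x Hx.
  assert (Hx1 : 1 < x) by (eapply Rle_lt_trans; [apply Rmax_l|exact Hx]).
  assert (Hx2 : 2 * (C - ln eps) < x) by (eapply Rle_lt_trans; [apply Rmax_r|exact Hx]).
  apply ball_R.
  assert (Hl : ln (x / (2 * s)) <= x / (2 * s) - 1) by (apply ln_le_xm1; apply Rdiv_lt_0_compat; lra).
  rewrite ln_div in Hl by lra.
  assert (Hb : s * ln x - x <= - x / 2 + C).
  { unfold C. assert (s * (ln x - ln (2 * s)) <= s * (x / (2 * s) - 1)) by (apply Rmult_le_compat_l; lra).
    replace (s * (x / (2 * s) - 1)) with (x / 2 - s) in H by (field; lra). lra. }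
  assert (H3 : exp (s * ln x - x) < eps).
  { rewrite <- (exp_ln eps) by (destruct eps; simpl; lra). apply exp_increasing. lra. }
  unfold Rminus in H3. rewrite exp_plus in H3.
  pose proof (exp_pos (s * ln x)). pose proof (exp_pos (- x)).
  rewrite Rabs_left1 by nra. lra.
Qed.

Lemma prod_pos : filter_prod (at_right 0) (Rbar_locally p_infty) (fun ab => 0 < fst ab /\ 0 < snd ab).
Proof.
  apply Filter_prod with (Q := fun a => 0 < a) (R := fun b => 0 < b).
  apply at_right0_pos. apply pinfty_gt. intros; simpl; auto.
Qed.

Lemma gamma_step : forall s l, 0 < s ->
  is_RInt_gen (gf s) (at_right 0) (Rbar_locally p_infty) l ->
  is_RInt_gen (gf (s + 1)) (at_right 0) (Rbar_locally p_infty) (s * l).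
Proof.
  intros s l Hs H.
  set (F := fun t => - (exp (s * ln t) * exp (- t))).
  assert (H0 : is_RInt_gen (Derive F) (at_right 0) (Rbar_locally p_infty) (0 - 0)).
  { apply is_RInt_gen_Derive.
    - generalize prod_pos. apply filter_imp. intros [a b] [Ha Hb] x Hx. simpl in *.
      assert (0 < x) by (apply (Rmin_pos_in a b); lra).
      eexists. apply F_derive; auto.
    - generalize prod_pos. apply filter_imp. intros [a b] [Ha Hb] x Hx. simpl in *.
      assert (Hx0 : 0 < x) by (apply (Rmin_pos_in a b); lra).
      apply continuous_ext_loc with (g := DF s).
      + exists (mkposreal x Hx0). intros y Hy. change R in y. pose proof (proj1 (ball_R x x y) Hy) as Hy'.
        assert (0 < y). { pose proof (Rle_abs (x - y)) as Hr. rewrite Rabs_minus_sym in Hr. lra. }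
        symmetry. apply is_derive_unique. apply F_derive; auto.
      + apply (@ex_derive_continuous R_AbsRing R_NormedModule). unfold DF. auto_derive. auto.
    - apply F_lim0; auto.
    - apply F_liminf; auto. }
  pose proof (@is_RInt_gen_scal R_NormedModule _ _ _ _ (gf s) s l H) as H1.
  pose proof (@is_RInt_gen_plus R_NormedModule _ _ _ _ _ _ _ _ H0 H1) as H2.
  replace (s * l) with (plus (0 - 0) (scal s l)).
  2:{ unfold plus, scal; simpl. unfold mult; simpl. ring. }
  revert H2. apply is_RInt_gen_ext.
  generalize prod_pos. apply filter_imp. intros [a b] [Ha Hb] x Hx. simpl in *.
  assert (0 < x) by (apply (Rmin_pos_in a b); lra).
  assert (E : Derive F x = DF s x) by (apply is_derive_unique; apply F_derive; auto).
  rewrite E.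
  unfold plus, scal; simpl. unfold mult; simpl. unfold DF, gf, Rpower.
  replace (s + 1 - 1) with s by ring. ring.
Qed.

Lemma gamma_ex_n : forall n s, 0 < s <= INR n + 1 -> exists l, 0 < l /\
  is_RInt_gen (gf s) (at_right 0) (Rbar_locally p_infty) l.
Proof.
  induction n as [|n IH]; intros s Hs.
  - apply gamma_base. simpl in Hs; lra.
  - rewrite S_INR in Hs. destruct (Rle_or_lt s (INR n + 1)) as [H|H].
    + apply IH; lra.
    + pose proof (pos_INR n).
      destruct (IH (s - 1)) as [l [Hl Hi]]. lra.
      exists ((s - 1) * l). split. apply Rmult_lt_0_compat; lra.
      replace s with (s - 1 + 1) at 1 by ring. apply gamma_step; auto. lra.
Qed.

Lemma gamma_ex : forall s, 0 < s -> exists l, 0 < l /\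
  is_RInt_gen (gf s) (at_right 0) (Rbar_locally p_infty) l.
Proof.
  intros s Hs. destruct (INR_archimed 1 s) as [n Hn]. lra.
  apply (gamma_ex_n n). lra.
Qed.

Lemma Gamma_eq : forall s l, is_RInt_gen (gf s) (at_right 0) (Rbar_locally p_infty) l -> Gamma s = l.
Proof.
  intros s l H. unfold Gamma. apply (@is_RInt_gen_unique R_CompleteNormedModule).
  apply Proper_StrongProper, at_right_proper_filter.
  apply Proper_StrongProper, Rbar_locally_filter.
  exact H.
Qed.

Lemma Gamma_pos : forall s, 0 < s -> 0 < Gamma s.
Proof.
  intros s Hs. destruct (gamma_ex s Hs) as [l [Hl H]]. rewrite (Gamma_eq s l H). auto.
Qed.

Lemma Gamma_succ : forall s, 0 < s -> Gamma (s + 1) = s * Gamma s.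
Proof.
  intros s Hs. destruct (gamma_ex s Hs) as [l [Hl H]]. rewrite (Gamma_eq s l H).
  apply Gamma_eq. apply gamma_step; auto.
Qed.

Lemma Series_zero : Series (fun _ : nat => 0) = 0.
Proof.
  rewrite (Series_ext (fun _ : nat => 0) (fun n : nat => 0 * 0)) by (intros; ring).
  rewrite Series_scal_l. ring.
Qed.

Lemma series_ge_term : forall (u : nat -> R) n, (forall k, 0 <= u k) -> ex_series u -> u n <= Series u.
Proof.
  intros u n Hu He. rewrite (Series_incr_n u (S n)) by (lia || auto). simpl pred.
  assert (H1 : u n <= sum_f_R0 u n).
  { destruct n. simpl; lra. simpl. pose proof (cond_pos_sum u n Hu). lra. }
  assert (H2 : 0 <= Series (fun k => u (S n + k)%nat)).
  { rewrite <- Series_zero. apply Series_le. intros; split; [lra|auto].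
    apply (ex_series_incr_n u (S n)); auto. }
  lra.
Qed.

Lemma ex_series_ext_R : forall u v : nat -> R, (forall n, u n = v n) -> ex_series u -> ex_series v.
Proof. intros u v H Hu. apply ex_series_ext with u; auto. Qed.

Lemma ex_series_lin : forall (u v : nat -> R) (p q : R), ex_series u -> ex_series v ->
  ex_series (fun k => p * u k + q * v k).
Proof.
  intros u v p q Hu Hv.
  apply (@ex_series_plus R_AbsRing R_NormedModule).
  apply (@ex_series_scal_l R_AbsRing R_NormedModule); auto.
  apply (@ex_series_scal_l R_AbsRing R_NormedModule); auto.
Qed.

Lemma Series_lin : forall (u v : nat -> R) (p q : R), ex_series u -> ex_series v ->
  Series (fun k => p * u k + q * v k) = p * Series u + q * Series v.
Proof.
  intros u v p q Hu Hv. rewrite Series_plus.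
  rewrite !Series_scal_l; auto.
  apply (@ex_series_scal_l R_AbsRing R_NormedModule); auto.
  apply (@ex_series_scal_l R_AbsRing R_NormedModule); auto.
Qed.

Lemma least_nat : forall P : nat -> Prop, (exists n, P n) -> exists m, P m /\ forall j, (j < m)%nat -> ~ P j.
Proof.
  intros P [n Hn]. revert Hn. induction n as [n IH] using (well_founded_induction Wf_nat.lt_wf). intros Hn.
  destruct (classic (exists j, (j < n)%nat /\ P j)) as [[j [Hj1 Hj2]]|Hno].
  - apply (IH j Hj1 Hj2).
  - exists n. split; auto. intros j Hj HP. apply Hno. eauto.
Qed.


Definition PS (u : nat -> R) (t : R) := Series (fun k => u k * t ^ k).

Lemma c_mono : forall (a b : nat -> R) (Hc : forall k, a k / b k < a (S k) / b (S k)) k j, (k <= j)%nat -> a k / b k <= a j / b j.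
Proof.
  intros a b Hc k j H. induction H. lra. pose proof (Hc m). lra.
Qed.

Lemma PS_pos : forall u t, (forall k, 0 < u k) -> 0 < t -> ex_series (fun k => u k * t ^ k) -> 0 < PS u t.
Proof.
  intros u t Hu Ht He. unfold PS.
  apply Rlt_le_trans with (u 0%nat * t ^ 0). simpl. rewrite Rmult_1_r; auto.
  apply (series_ge_term (fun k => u k * t ^ k) 0); auto.
  intros k. left. apply Rmult_lt_0_compat; auto. apply pow_lt; auto.
Qed.

Lemma mono_main : forall (a b : nat -> R)
  (Hb : forall k, 0 < b k)
  (Hc : forall k, a k / b k < a (S k) / b (S k))
  (Hsa : forall t, 0 < t -> ex_series (fun k => a k * t ^ k))
  (Hsb : forall t, 0 < t -> ex_series (fun k => b k * t ^ k)) z w, 0 < z -> z < w -> PS a z / PS b z < PS a w / PS b w.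
Proof.
  intros a b Hb Hc Hsa Hsb z w Hz Hzw.
  assert (Hw : 0 < w) by lra.
  pose proof (PS_pos b z Hb Hz (Hsb z Hz)) as Gz.
  pose proof (PS_pos b w Hb Hw (Hsb w Hw)) as Gw.
  set (lam := PS a z / PS b z).
  set (d := fun k => a k - lam * b k).
  assert (Hd : forall k, d k = b k * (a k / b k - lam)).
  { intros k. unfold d. field. apply Rgt_not_eq, Hb. }
  assert (Hsd : forall t, 0 < t -> ex_series (fun k => d k * t ^ k)).
  { intros t Ht. apply ex_series_ext_R with (u := fun k => 1 * (a k * t ^ k) + (- lam) * (b k * t ^ k)).
    intros; unfold d; ring. apply ex_series_lin; auto. }
  assert (HSd : forall t, 0 < t -> Series (fun k => d k * t ^ k) = PS a t - lam * PS b t).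
  { intros t Ht. rewrite (Series_ext _ (fun k => 1 * (a k * t ^ k) + (- lam) * (b k * t ^ k))).
    rewrite Series_lin; auto. unfold PS; ring. intros; unfold d; ring. }
  assert (Hz0 : Series (fun k => d k * z ^ k) = 0).
  { rewrite HSd; auto. unfold lam. field. lra. }
  assert (Hex : exists k, 0 <= d k).
  { apply NNPP. intro Hn.
    assert (Hneg : forall k, d k < 0). { intros k. apply Rnot_le_lt. intro. apply Hn. eauto. }
    assert (H0 : - (d 0%nat * z ^ 0) <= Series (fun k => - (d k * z ^ k))).
    { apply (series_ge_term (fun k => - (d k * z ^ k)) 0).
      intros k. pose proof (Hneg k). pose proof (pow_lt z k Hz). nra.
      apply (@ex_series_opp R_AbsRing R_NormedModule). auto. }
    rewrite Series_opp, Hz0 in H0. pose proof (Hneg 0%nat). simpl in H0. lra. }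
  destruct (least_nat (fun k => 0 <= d k) Hex) as [m [Hm1 Hm2]].
  assert (Hge : forall k, (m <= k)%nat -> 0 <= d k).
  { intros k Hk. rewrite Hd. pose proof (c_mono a b Hc m k Hk). rewrite Hd in Hm1.
    pose proof (Hb m). pose proof (Hb k).
    assert (0 <= a m / b m - lam).
    { destruct (Rle_or_lt 0 (a m / b m - lam)); auto. nra. }
    apply Rmult_le_pos; lra. }
  assert (Hlt : forall k, (k < m)%nat -> d k < 0).
  { intros k Hk. apply Rnot_le_lt. apply Hm2; auto. }
  assert (HSm : 0 < d (S m)).
  { rewrite Hd. pose proof (Hc m). rewrite Hd in Hm1. pose proof (Hb m). pose proof (Hb (S m)).
    assert (0 <= a m / b m - lam).
    { destruct (Rle_or_lt 0 (a m / b m - lam)); auto. nra. }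
    apply Rmult_lt_0_compat; lra. }
  set (e := fun k => d k * (w ^ k / w ^ m - z ^ k / z ^ m)).
  assert (He : forall k, 0 <= e k).
  { intros k. unfold e. destruct (Compare_dec.le_lt_dec m k) as [Hk|Hk].
    - replace k with (m + (k - m))%nat by lia. rewrite !pow_add.
      replace (w ^ m * w ^ (k - m) / w ^ m) with (w ^ (k - m)) by (field; apply pow_nonzero; lra).
      replace (z ^ m * z ^ (k - m) / z ^ m) with (z ^ (k - m)) by (field; apply pow_nonzero; lra).
      apply Rmult_le_pos. apply Hge; lia.
      assert (z ^ (k - m) <= w ^ (k - m)) by (apply pow_incr; lra). lra.
    - pose proof (Hlt k Hk).
      replace m with (k + (m - k))%nat by lia. rewrite !pow_add.
      replace (w ^ k / (w ^ k * w ^ (m - k))) with (/ w ^ (m - k)) by (field; split; apply pow_nonzero; lra).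
      replace (z ^ k / (z ^ k * z ^ (m - k))) with (/ z ^ (m - k)) by (field; split; apply pow_nonzero; lra).
      assert (/ w ^ (m - k) <= / z ^ (m - k)).
      { apply Rinv_le_contravar. apply pow_lt; lra. apply pow_incr; lra. }
      nra. }
  assert (Hee : ex_series e).
  { apply ex_series_ext_R with (u := fun k => (/ w ^ m) * (d k * w ^ k) + (- / z ^ m) * (d k * z ^ k)).
    intros k; unfold e, Rdiv; ring. apply ex_series_lin; auto. }
  assert (HeS : Series e = / w ^ m * Series (fun k => d k * w ^ k) - / z ^ m * Series (fun k => d k * z ^ k)).
  { rewrite (Series_ext _ (fun k => (/ w ^ m) * (d k * w ^ k) + (- / z ^ m) * (d k * z ^ k))).
    rewrite Series_lin; auto. ring. intros k; unfold e, Rdiv; ring. }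
  assert (HeP : 0 < Series e).
  { apply Rlt_le_trans with (e (S m)). unfold e.
    replace (w ^ S m / w ^ m - z ^ S m / z ^ m) with (w - z).
    apply Rmult_lt_0_compat; lra. simpl. field. split; apply pow_nonzero; lra.
    apply series_ge_term; auto. }
  rewrite HeS, Hz0, HSd in HeP by auto.
  assert (0 < / w ^ m) by (apply Rinv_0_lt_compat, pow_lt; lra).
  assert (0 < PS a w - lam * PS b w) by nra.
  apply Rmult_lt_reg_r with (PS b w); auto. replace (PS a w / PS b w * PS b w) with (PS a w) by (field; lra). lra.
Qed.

Definition cf (p q : R) (k : nat) : R := / (Gamma (INR k + p) * Gamma (INR k + q)).

Lemma cf_pos : forall p q k, 0 < p -> 0 < q -> 0 < cf p q k.
Proof.
  intros p q k Hp Hq. pose proof (pos_INR k). unfold cf. apply Rinv_0_lt_compat.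
  apply Rmult_lt_0_compat; apply Gamma_pos; lra.
Qed.

Lemma cf_succ : forall p q k, 0 < p -> 0 < q ->
  cf p q (S k) = cf p q k / ((INR k + p) * (INR k + q)).
Proof.
  intros p q k Hp Hq. pose proof (pos_INR k). unfold cf. rewrite S_INR.
  replace (INR k + 1 + p) with ((INR k + p) + 1) by ring.
  replace (INR k + 1 + q) with ((INR k + q) + 1) by ring.
  rewrite !Gamma_succ by lra.
  pose proof (Gamma_pos (INR k + p)). pose proof (Gamma_pos (INR k + q)).
  field. repeat split; try apply Rgt_not_eq; lra.
Qed.

Lemma lim_quad : forall p q, is_lim_seq (fun n => (INR n + p) * (INR n + q)) p_infty.
Proof.
  intros p q. apply is_lim_seq_mult with p_infty p_infty.
  apply is_lim_seq_plus with p_infty p. apply is_lim_seq_INR. apply is_lim_seq_const. reflexivity.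
  apply is_lim_seq_plus with p_infty q. apply is_lim_seq_INR. apply is_lim_seq_const. reflexivity.
  reflexivity.
Qed.

Lemma cf_series : forall p q t, 0 < p -> 0 < q -> ex_series (fun k => cf p q k * t ^ k).
Proof.
  intros p q t Hp Hq.
  assert (Hr : CV_radius (cf p q) = p_infty).
  { apply CV_radius_infinite_DAlembert.
    intros n. apply Rgt_not_eq, cf_pos; auto.
    apply is_lim_seq_ext with (u := fun n => / ((INR n + p) * (INR n + q))).
    { intros n. pose proof (pos_INR n). rewrite cf_succ by auto.
      pose proof (cf_pos p q n Hp Hq).
      replace (cf p q n / ((INR n + p) * (INR n + q)) / cf p q n) with (/ ((INR n + p) * (INR n + q))).
      rewrite Rabs_pos_eq. auto. left. apply Rinv_0_lt_compat. apply Rmult_lt_0_compat; lra.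
      field. repeat split; apply Rgt_not_eq; lra. }
    change (Finite 0) with (Rbar_inv p_infty).
    apply is_lim_seq_inv. apply lim_quad. discriminate. }
  assert (H : ex_pseries (cf p q) t). { apply CV_radius_inside. rewrite Hr. exact I. }
  unfold ex_pseries in H. revert H. apply ex_series_ext_R. intros n.
  rewrite pow_n_pow. unfold scal; simpl. unfold mult; simpl. ring.
Qed.

Lemma cf_ratio : forall p1 q1 p2 q2, 0 < p1 -> 0 < q1 -> 0 < p2 -> 0 < q2 ->
  (forall k, (INR k + p1) * (INR k + q1) < (INR k + p2) * (INR k + q2)) ->
  forall k, cf p1 q1 k / cf p2 q2 k < cf p1 q1 (S k) / cf p2 q2 (S k).
Proof.
  intros p1 q1 p2 q2 H1 H2 H3 H4 H k.
  pose proof (pos_INR k). rewrite !cf_succ by auto.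
  pose proof (cf_pos p1 q1 k H1 H2). pose proof (cf_pos p2 q2 k H3 H4).
  pose proof (H k).
  set (P1 := (INR k + p1) * (INR k + q1)) in *. set (P2 := (INR k + p2) * (INR k + q2)) in *.
  assert (0 < P1) by (unfold P1; apply Rmult_lt_0_compat; lra).
  replace (cf p1 q1 k / P1 / (cf p2 q2 k / P2)) with ((cf p1 q1 k / cf p2 q2 k) * (P2 / P1))
    by (field; repeat split; apply Rgt_not_eq; lra).
  assert (1 < P2 / P1).
  { apply Rmult_lt_reg_r with P1; auto. unfold Rdiv; rewrite Rmult_assoc, Rinv_l by lra. lra. }
  assert (0 < cf p1 q1 k / cf p2 q2 k) by (apply Rdiv_lt_0_compat; auto).
  nra.
Qed.

Lemma Rpower_split : forall x y n, 0 < x -> Rpower x (INR (2 * n) + y) = Rpower x y * (x ^ 2) ^ n.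
Proof.
  intros x y n Hx. rewrite Rpower_plus, Rpower_pow by auto. rewrite <- pow_mult. ring.
Qed.

Lemma struve_eq : forall nu x, 0 < x ->
  struveL nu x = Rpower (x / 2) (nu + 1) * PS (cf (3/2) (nu + 3/2)) ((x / 2) ^ 2).
Proof.
  intros nu x Hx. unfold struveL, PS. rewrite <- Series_scal_l. apply Series_ext. intros k.
  replace (2 * INR k + nu + 1) with (INR (2 * k) + (nu + 1)) by (rewrite mult_INR; simpl; ring).
  rewrite Rpower_split by lra. unfold cf.
  replace (INR k + (nu + 3 / 2)) with (INR k + nu + 3 / 2) by ring.
  unfold Rdiv. ring.
Qed.

Lemma lommel_eq : forall mu nu x, 0 < x ->
  lommel_t mu nu x = Rpower (x / 2) (mu + 1) * PS (cf ((mu - nu + 3) / 2) ((mu + nu + 3) / 2)) ((x / 2) ^ 2).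
Proof.
  intros mu nu x Hx. unfold lommel_t, PS. rewrite <- Series_scal_l. apply Series_ext. intros k.
  replace (mu + 2 * INR k + 1) with (INR (2 * k) + (mu + 1)) by (rewrite mult_INR; simpl; ring).
  rewrite Rpower_split by lra. unfold cf.
  unfold Rdiv. ring.
Qed.

Lemma ratio_eq : forall mu nu x, 0 < x ->
  0 < PS (cf ((mu - nu + 3) / 2) ((mu + nu + 3) / 2)) ((x / 2) ^ 2) ->
  ratio mu nu x = Rpower 2 (mu - nu) *
     (PS (cf (3/2) (nu + 3/2)) ((x / 2) ^ 2) / PS (cf ((mu - nu + 3) / 2) ((mu + nu + 3) / 2)) ((x / 2) ^ 2)).
Proof.
  intros mu nu x Hx HP. unfold ratio. rewrite struve_eq, lommel_eq by auto.
  assert (E : Rpower x (mu - nu) * Rpower (x / 2) (nu + 1) = Rpower 2 (mu - nu) * Rpower (x / 2) (mu + 1)).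
  { unfold Rpower. rewrite <- !exp_plus. f_equal. rewrite ln_div by lra. ring. }
  assert (0 < Rpower (x / 2) (mu + 1)) by (unfold Rpower; apply exp_pos).
  set (A := PS (cf (3/2) (nu + 3/2)) ((x / 2) ^ 2)) in *.
  set (B := PS (cf ((mu - nu + 3) / 2) ((mu + nu + 3) / 2)) ((x / 2) ^ 2)) in *.
  rewrite <- Rmult_assoc, E. field. split; apply Rgt_not_eq; lra.
Qed.

Lemma sq_lt : forall x y, 0 < x -> x < y -> 0 < (x / 2) ^ 2 /\ (x / 2) ^ 2 < (y / 2) ^ 2.
Proof. intros x y Hx Hxy. split. apply pow_lt; lra. simpl. nra. Qed.

Theorem theorem3p2 :
  (forall mu nu : R, -3/2 < nu < mu ->
     forall x y : R, 0 < x -> x < y -> ratio mu nu x < ratio mu nu y) /\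
  (forall mu nu : R,
     ((-3 < mu <= -3/2 /\ Rabs nu < mu + 3) \/ (-3/2 < mu /\ mu < nu < mu + 3)) ->
     forall x y : R, 0 < x -> x < y -> ratio mu nu y < ratio mu nu x).
Proof.
  assert (Gen : forall mu nu, 0 < nu + 3/2 -> 0 < (mu - nu + 3) / 2 -> 0 < (mu + nu + 3) / 2 ->
    forall t, 0 < t -> 0 < PS (cf ((mu - nu + 3) / 2) ((mu + nu + 3) / 2)) t /\ 0 < PS (cf (3/2) (nu + 3/2)) t).
  { intros mu nu H1 H2 H3 t Ht. split; apply PS_pos; auto; intros; try apply cf_pos; try lra; apply cf_series; lra. }
  assert (K : forall mu nu, 0 < Rpower 2 (mu - nu)) by (intros; unfold Rpower; apply exp_pos).
  split.
  - intros mu nu [H1 H2] x y Hx Hxy.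
    destruct (sq_lt x y Hx Hxy) as [Hz Hzw].
    assert (P1 : 0 < nu + 3/2) by lra. assert (P2 : 0 < (mu - nu + 3) / 2) by lra.
    assert (P3 : 0 < (mu + nu + 3) / 2) by lra.
    pose proof (Gen mu nu P1 P2 P3 _ Hz) as [Bz Az].
    pose proof (Gen mu nu P1 P2 P3 ((y / 2) ^ 2) ltac:(lra)) as [Bw Aw].
    rewrite (ratio_eq mu nu x), (ratio_eq mu nu y) by (first [assumption | lra]).
    apply Rmult_lt_compat_l. apply K.
    assert (HA : forall k, 0 < cf (3/2) (nu + 3/2) k) by (intros; apply cf_pos; lra).
    assert (HB : forall k, 0 < cf ((mu - nu + 3) / 2) ((mu + nu + 3) / 2) k) by (intros; apply cf_pos; lra).
    assert (HC : forall k, cf (3/2) (nu + 3/2) k / cf ((mu - nu + 3) / 2) ((mu + nu + 3) / 2) k <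
       cf (3/2) (nu + 3/2) (S k) / cf ((mu - nu + 3) / 2) ((mu + nu + 3) / 2) (S k)).
    { apply cf_ratio; try lra. intros k. pose proof (pos_INR k).
      assert (E : (INR k + (mu - nu + 3) / 2) * (INR k + (mu + nu + 3) / 2) - (INR k + 3 / 2) * (INR k + (nu + 3 / 2))
                  = (mu - nu) * (INR k + (mu + nu + 6) / 4)) by field.
      assert (0 < (mu - nu) * (INR k + (mu + nu + 6) / 4)) by (apply Rmult_lt_0_compat; lra). lra. }
    apply (mono_main _ _ HB HC); auto; intros; apply cf_series; lra.
  - intros mu nu H x y Hx Hxy.
    assert (Hc : 0 < nu + 3/2 /\ 0 < (mu - nu + 3) / 2 /\ 0 < (mu + nu + 3) / 2 /\ mu < nu /\ 0 < mu + nu + 6).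
    { destruct H as [[H1 H2]|[H1 H2]].
      - apply Rabs_def2 in H2. destruct H2. repeat split; lra.
      - repeat split; lra. }
    destruct Hc as [P1 [P2 [P3 [P4 P5]]]].
    destruct (sq_lt x y Hx Hxy) as [Hz Hzw].
    pose proof (Gen mu nu P1 P2 P3 _ Hz) as [Bz Az].
    pose proof (Gen mu nu P1 P2 P3 ((y / 2) ^ 2) ltac:(lra)) as [Bw Aw].
    rewrite (ratio_eq mu nu x), (ratio_eq mu nu y) by (first [assumption | lra]).
    apply Rmult_lt_compat_l. apply K.
    set (A := cf (3/2) (nu + 3/2)) in *.
    set (B := cf ((mu - nu + 3) / 2) ((mu + nu + 3) / 2)) in *.
    assert (M : PS B ((x / 2) ^ 2) / PS A ((x / 2) ^ 2) < PS B ((y / 2) ^ 2) / PS A ((y / 2) ^ 2)).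
    { assert (HA : forall k, 0 < A k) by (intros; apply cf_pos; lra).
      assert (HB : forall k, 0 < B k) by (intros; apply cf_pos; lra).
      assert (HC : forall k, B k / A k < B (S k) / A (S k)).
      { apply cf_ratio; try lra. intros k. pose proof (pos_INR k).
        assert (E : (INR k + 3 / 2) * (INR k + (nu + 3 / 2)) - (INR k + (mu - nu + 3) / 2) * (INR k + (mu + nu + 3) / 2)
                  = (nu - mu) * (INR k + (mu + nu + 6) / 4)) by field.
        assert (0 < (nu - mu) * (INR k + (mu + nu + 6) / 4)) by (apply Rmult_lt_0_compat; lra). lra. }
      apply (mono_main _ _ HA HC); auto; intros; apply cf_series; lra. }
    replace (PS A ((y / 2) ^ 2) / PS B ((y / 2) ^ 2)) with (/ (PS B ((y / 2) ^ 2) / PS A ((y / 2) ^ 2)))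
      by (field; split; apply Rgt_not_eq; lra).
    replace (PS A ((x / 2) ^ 2) / PS B ((x / 2) ^ 2)) with (/ (PS B ((x / 2) ^ 2) / PS A ((x / 2) ^ 2)))
      by (field; split; apply Rgt_not_eq; lra).
    apply Rinv_lt_contravar; auto.
    apply Rmult_lt_0_compat; apply Rdiv_lt_0_compat; auto.
Qed.
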